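(* Let $A\ge A^*:=\mu T(e^{\rho T}-1)^{-1}$, $\phi\in\mathcal C_A$, and let $(v_n)_{n\ge0}$ be the sequence defined in the context. There exists a modulus $\widehat m$ such that $$\sup_{n\ge1}\big|e^{\rho t}v_n(t,x)-\phi(x)\big|\le\widehat m(t)\quad\text{for all }(t,x)\in\overline Q.$$
   Context: $W$ is a one-dimensional Brownian motion; constants $\mu>0$, $\sigma>0$, $\rho>0$, $T>0$, $\lambda_f>0$, $\lambda_p>0$; $c(\zeta)=(\lambda_f+(1+\lambda_p)\zeta)\mathbf 1_{\{\zeta>0\}}$; for $\psi:[0,\infty)\to\mathbb R$, $\mathcal I(\psi)(x):=\sup_{\zeta>0}(\psi(x+\zeta)-c(\zeta))$; $a^+=\max(a,0)$. $Q:=(0,T)\times(0,\infty)$. For $x\ge0$, $X^x_s:=x+\mu s+\sigma W_s$, $\theta^x:=\inf\{s>0:X^x_s<0\}$. $\mathcal C_A$: the set of continuous nondecreasing $\phi:[0,\infty)\to[0,\infty)$ with $(\mathcal I(\phi)(x))^+\le\phi(x)$ for all $x$, $\phi(0)=(\mathcal I(\phi)(0))^+$, and $x\mapsto\phi(x)-x$ nondecreasing with values in $[0,A]$. Sequence: $v_0(t,x):=\mathbb E[e^{-\rho t}\phi(X^x_t)\mathbf 1_{\{\theta^x\ge t\}}]$, and for $n\ge1$, $v_n\in C^\infty(Q)\cap C(\overline Q)$ is the (unique) solution of $\rho v_n+(\partial_t-\mu\partial_x-\tfrac12\sigma^2\partial_{xx})v_n=0$ on $Q$, $v_n(0,x)=\phi(x)$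 for $x\ge0$, $v_n(t,0)=(\mathcal I(v_{n-1}(t,\cdot))(0))^+$ for $t\in[0,T]$; these satisfy $e^{-\rho t}x\le v_n(t,x)\le e^{-\rho t}(x+A+\mu t)$. A modulus is an increasing function $m:[0,\infty)\to[0,\infty)$, continuous at $0$, with $m(0)=0$. *)

(* Defs.v *)
From Stdlib Require Import Reals Lra List.
From Coquelicot Require Import Coquelicot.
Open Scope R_scope.

Definition cost (lf lp z : R) : R :=
  if Rlt_dec 0 z then lf + (1 + lp) * z else 0.

Definition Iop (lf lp : R) (psi : R -> R) (x : R) : Rbar :=
  Lub_Rbar (fun r => exists z, 0 < z /\ r = psi (x + z) - cost lf lp z).

Definition rbar_pos (r : Rbar) : Rbar :=
  match r with
  | Finite a => Finite (Rmax a 0)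
  | p_infty => p_infty
  | m_infty => Finite 0
  end.

Definition in_CA (lf lp A : R) (phi : R -> R) : Prop :=
  (forall x, 0 <= x ->
     filterlim phi (within (fun y => 0 <= y) (locally x)) (locally (phi x)))
  /\ (forall x y, 0 <= x -> x <= y -> phi x <= phi y)
  /\ (forall x, 0 <= x -> 0 <= phi x)
  /\ (forall x, 0 <= x -> Rbar_le (rbar_pos (Iop lf lp phi x)) (Finite (phi x)))
  /\ Finite (phi 0) = rbar_pos (Iop lf lp phi 0)
  /\ (forall x y, 0 <= x -> x <= y -> phi x - x <= phi y - y)
  /\ (forall x, 0 <= x -> 0 <= phi x - x <= A).

(* transition density of X^x_s = x + mu s + sigma W_s killed when leaving
   [0,oo) (method of images):  P(X^x_t in dy, theta^x >= t) = kdens t x y dy,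
   for t > 0, x >= 0, y > 0. *)
Definition kdens (mu sigma t x y : R) : R :=
  / (sigma * sqrt (2 * PI * t)) *
  (exp (- (y - x - mu * t) ^ 2 / (2 * sigma ^ 2 * t))
   - exp (- 2 * mu * x / sigma ^ 2)
     * exp (- (y + x - mu * t) ^ 2 / (2 * sigma ^ 2 * t))).

(* v_0(t,x) = E[e^{-rho t} phi(X^x_t) 1_{theta^x >= t}] *)
Definition v0 (mu sigma rho : R) (phi : R -> R) (t x : R) : R :=
  if Rle_dec t 0 then phi x
  else exp (- rho * t) *
       RInt_gen (fun y => phi y * kdens mu sigma t x y)
                (at_point 0) (Rbar_locally p_infty).

Fixpoint Dw (w : list bool) (f : R -> R -> R) : R -> R -> R :=
  match w with
  | nil => f
  | b :: w' =>
      let g := Dw w' f in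
      if b then fun t x => Derive (fun s => g s x) t
      else fun t x => Derive (fun y => g t y) x
  end.

Definition inQ (T t x : R) : Prop := 0 < t < T /\ 0 < x.
Definition inQbar (T t x : R) : Prop := 0 <= t <= T /\ 0 <= x.

Definition smooth_on_Q (T : R) (f : R -> R -> R) : Prop :=
  forall (w : list bool) t x, inQ T t x ->
    filterlim (fun p : R * R => Dw w f (fst p) (snd p))
              (locally (t, x)) (locally (Dw w f t x))
    /\ ex_derive (fun s => Dw w f s x) t
    /\ ex_derive (fun y => Dw w f t y) x.

Definition cont_on_Qbar (T : R) (f : R -> R -> R) : Prop :=
  forall t x, inQbar T t x ->
    filterlim (fun p : R * R => f (fst p) (snd p))
              (within (fun p : R * R => inQbar T (fst p) (snd p)) (locally (t, x)))
              (locally (f t x)).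

Definition is_modulus (m : R -> R) : Prop :=
  (forall s t, 0 <= s -> s < t -> m s < m t)
  /\ (forall t, 0 <= t -> 0 <= m t)
  /\ m 0 = 0
  /\ filterlim m (within (fun s => 0 <= s) (locally 0)) (locally 0).

(* Main.v *)
Require Import Defs.
From Stdlib Require Import Reals Lra Lia Psatz Classical ClassicalEpsilon.
From Coquelicot Require Import Coquelicot.
Open Scope R_scope.
Lemma ballR (x e y : R) : ball x e y <-> Rabs (y - x) < e.
Proof.
  unfold ball; simpl; unfold AbsRing_ball, abs, minus, plus, opp; simpl. tauto.
Qed.

Lemma ballRR (p : R * R) e (q : R * R) :
  ball p e q <-> Rabs (fst q - fst p) < e /\ Rabs (snd q - snd p) < e.
Proof.
  destruct p, q. unfold ball; simpl. unfold prod_ball. rewrite !ballR. simpl. tauto.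
Qed.

Definition epsdelta2 (D : R -> R -> Prop) (f : R -> R -> R) (t x : R) :=
  forall eps, 0 < eps -> exists d, 0 < d /\ forall t' x', D t' x' ->
    Rabs (t' - t) < d -> Rabs (x' - x) < d -> Rabs (f t' x' - f t x) < eps.

Lemma within_ed (D : R -> R -> Prop) f t x :
  filterlim (fun p : R * R => f (fst p) (snd p))
     (within (fun p : R * R => D (fst p) (snd p)) (locally (t, x))) (locally (f t x)) ->
  epsdelta2 D f t x.
Proof.
  intros H eps Heps.
  destruct (proj1 (filterlim_locally _ _) H (mkposreal eps Heps)) as [d Hd].
  exists d; split; [apply cond_pos|].
  intros t' x' HD h1 h2.
  specialize (Hd (t', x')). simpl in Hd.
  assert (B : ball (t, x) d (t', x')) by (apply ballRR; simpl; lra).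
  specialize (Hd B HD). apply ballR in Hd. exact Hd.
Qed.

Lemma cont_ed f t x :
  continuous (fun p : R * R => f (fst p) (snd p)) (t, x) ->
  forall D, epsdelta2 D f t x.
Proof.
  intros H D eps Heps.
  destruct (proj1 (filterlim_locally _ _) H (mkposreal eps Heps)) as [d Hd].
  exists d; split; [apply cond_pos|].
  intros t' x' HD h1 h2.
  specialize (Hd (t', x')). simpl in Hd.
  assert (B : ball (t, x) d (t', x')) by (apply ballRR; simpl; lra).
  specialize (Hd B). apply ballR in Hd. exact Hd.
Qed.

Lemma ed_minus D f g t x : epsdelta2 D f t x -> epsdelta2 D g t x ->
  epsdelta2 D (fun a b => f a b - g a b) t x.
Proof.
  intros Hf Hg eps Heps.
  destruct (Hf (eps/2) ltac:(lra)) as [d1 [Hd1 H1]].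
  destruct (Hg (eps/2) ltac:(lra)) as [d2 [Hd2 H2]].
  exists (Rmin d1 d2); split; [apply Rmin_glb_lt; auto|].
  intros t' x' HD a b.
  assert (a1 : Rabs (t'-t) < d1) by (eapply Rlt_le_trans; [exact a| apply Rmin_l]).
  assert (a2 : Rabs (t'-t) < d2) by (eapply Rlt_le_trans; [exact a| apply Rmin_r]).
  assert (b1 : Rabs (x'-x) < d1) by (eapply Rlt_le_trans; [exact b| apply Rmin_l]).
  assert (b2 : Rabs (x'-x) < d2) by (eapply Rlt_le_trans; [exact b| apply Rmin_r]).
  specialize (H1 t' x' HD a1 b1). specialize (H2 t' x' HD a2 b2).
  apply Rabs_def2 in H1. apply Rabs_def2 in H2. apply Rabs_def1; lra.
Qed.

Lemma ed_scal D f t x s : epsdelta2 D f t x -> s * s = 1 ->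
  epsdelta2 D (fun a b => s * f a b) t x.
Proof.
  intros Hf Hs eps Heps.
  destruct (Hf eps Heps) as [d [Hd H]]. exists d; split; auto.
  intros t' x' HD a b. specialize (H t' x' HD a b).
  rewrite <- Rmult_minus_distr_l, Rabs_mult.
  assert (Rabs s = 1).
  { assert (Rabs s * Rabs s = 1) by (rewrite <- Rabs_mult, Hs; apply Rabs_R1).
    assert (0 <= Rabs s) by apply Rabs_pos. nra. }
  rewrite H0; lra.
Qed.

Lemma ed_mono (D D' : R -> R -> Prop) f t x : (forall a b, D' a b -> D a b) ->
  epsdelta2 D f t x -> epsdelta2 D' f t x.
Proof.
  intros HDD H eps Heps. destruct (H eps Heps) as [d [Hd H1]].
  exists d; split; auto.
Qed.

Lemma c2_plus (f g : R * R -> R) p : continuous f p -> continuous g p ->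
  continuous (fun q => f q + g q) p.
Proof. intros; apply (continuous_plus f g); auto. Qed.
Lemma c2_mult (f g : R * R -> R) p : continuous f p -> continuous g p ->
  continuous (fun q => f q * g q) p.
Proof. intros; apply (continuous_mult f g); auto. Qed.
Lemma c2_const (c : R) (p : R * R) : continuous (fun _ : R * R => c) p.
Proof. apply continuous_const. Qed.
Lemma c2_fst (p : R * R) : continuous (fun q : R * R => fst q) p.
Proof. destruct p; apply continuous_fst. Qed.
Lemma c2_snd (p : R * R) : continuous (fun q : R * R => snd q) p.
Proof. destruct p; apply continuous_snd. Qed.
Lemma c2_exp (f : R * R -> R) p : continuous f p ->
  continuous (fun q => exp (f q)) p.
Proof.
  intros H. apply (continuous_comp f exp); auto.
  apply (@ex_derive_continuous R_AbsRing R_NormedModule exp). auto_derive. auto.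
Qed.

Definition rect (a b c d t x : R) := a <= t <= b /\ c <= x <= d.

Lemma UC2 a b c d f :
  (forall t x, rect a b c d t x -> epsdelta2 (rect a b c d) f t x) ->
  forall eps, 0 < eps -> exists dd, 0 < dd /\ forall t x t' x',
    rect a b c d t x -> rect a b c d t' x' ->
    Rabs (t - t') < dd -> Rabs (x - x') < dd -> Rabs (f t x - f t' x') < eps.
Proof.
  intros H eps Heps.
  assert (Ex : forall u v : R, exists r, 0 < r /\ (rect a b c d u v ->
     forall t' x', rect a b c d t' x' -> Rabs (t' - u) < 2 * r ->
       Rabs (x' - v) < 2 * r -> Rabs (f t' x' - f u v) < eps / 2)).
  { intros u v. destruct (classic (rect a b c d u v)) as [Hr|Hr].
    - destruct (H u v Hr (eps/2) ltac:(lra)) as [dl [Hdl Hdl2]].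
      exists (dl/2); split; [lra|]. intros _ t' x' Hr' h1 h2.
      apply Hdl2; auto; lra.
    - exists 1; split; [lra|]. intros Hc; contradiction. }
  set (g := fun u v => proj1_sig (constructive_indefinite_description _ (Ex u v))).
  assert (Hg : forall u v, 0 < g u v /\ (rect a b c d u v ->
     forall t' x', rect a b c d t' x' -> Rabs (t' - u) < 2 * g u v ->
       Rabs (x' - v) < 2 * g u v -> Rabs (f t' x' - f u v) < eps / 2)).
  { intros u v. exact (proj2_sig (constructive_indefinite_description _ (Ex u v))). }
  set (delta := fun u v => mkposreal (g u v) (proj1 (Hg u v))).
  destruct (compactness_value_2d a b c d delta) as [dd Hdd].
  assert (Hdg : forall u v, pos (delta u v) = g u v) by reflexivity.
  clearbody delta. clearbody g.
  exists dd; split; [apply cond_pos|].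
  intros t x t' x' R1 R2 h1 h2.
  destruct R1 as [R1a R1b].
  specialize (Hdd t x R1a R1b).
  apply NNPP. intro Hn. apply Hdd. intros [u [w [Hu [Hw [H1 [H2 H3]]]]]].
  apply Hn. rewrite Hdg in H1, H2, H3. assert (0 < dd) by apply cond_pos.
  destruct (Hg u w) as [_ Hgu].
  assert (Ruw : rect a b c d u w) by (split; auto).
  assert (A1 := Hgu Ruw t x (conj R1a R1b)).
  assert (A2 := Hgu Ruw t' x' R2).
  assert (Rabs (t - u) < 2 * g u w) by lra.
  assert (Rabs (x - w) < 2 * g u w) by lra.
  assert (Rabs (t' - u) < 2 * g u w).
  { replace (t' - u) with ((t' - t) + (t - u)) by ring.
    eapply Rle_lt_trans; [apply Rabs_triang|].
    rewrite Rabs_minus_sym in h1. lra. }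
  assert (Rabs (x' - w) < 2 * g u w).
  { replace (x' - w) with ((x' - x) + (x - w)) by ring.
    eapply Rle_lt_trans; [apply Rabs_triang|].
    rewrite Rabs_minus_sym in h2. lra. }
  specialize (A1 H4 H5). specialize (A2 H6 H7).
  apply Rabs_def2 in A1. apply Rabs_def2 in A2. apply Rabs_def1; lra.
Qed.

Definition clamp (a b x : R) := Rmax a (Rmin b x).

Lemma clamp_in a b x : a <= b -> a <= clamp a b x <= b.
Proof. intros; unfold clamp, Rmax, Rmin; repeat destruct Rle_dec; lra. Qed.

Lemma clamp_id a b x : a <= x <= b -> clamp a b x = x.
Proof. intros; unfold clamp, Rmax, Rmin; repeat destruct Rle_dec; lra. Qed.

Lemma clamp_lip a b x y : a <= b -> Rabs (clamp a b x - clamp a b y) <= Rabs (x - y).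
Proof.
  intros; unfold clamp, Rmax, Rmin; repeat destruct Rle_dec;
  unfold Rabs; repeat destruct Rcase_abs; lra.
Qed.

Lemma ed_cont_pt (f : R -> R) x :
  (forall eps, 0 < eps -> exists d, 0 < d /\ forall y, Rabs (y - x) < d -> Rabs (f y - f x) < eps) ->
  continuity_pt f x.
Proof.
  intros H eps Heps. destruct (H eps Heps) as [d [Hd H1]].
  exists d; split; auto. intros y [_ Hy]. simpl in *. unfold R_dist in *. auto.
Qed.

Lemma EVT2 a b c d f : a <= b -> c <= d ->
  (forall t x, rect a b c d t x -> epsdelta2 (rect a b c d) f t x) ->
  exists ta xa, rect a b c d ta xa /\ forall t x, rect a b c d t x -> f t x <= f ta xa.
Proof.
  intros hab hcd H.
  assert (U := UC2 a b c d f H).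
  assert (Ex : forall t, exists xm, c <= xm <= d /\
     forall x, c <= x <= d -> f (clamp a b t) x <= f (clamp a b t) xm).
  { intros t. set (t0 := clamp a b t).
    assert (Ht0 : a <= t0 <= b) by (apply clamp_in; auto).
    destruct (continuity_ab_maj (fun x => f t0 (clamp c d x)) c d hcd) as [xm [Hxm2 Hxm1]].
    { intros z _. apply ed_cont_pt. intros eps Heps.
      destruct (U eps Heps) as [dd [Hdd Hu]]. exists dd; split; auto.
      intros y Hy. apply Hu.
      - split; auto; apply clamp_in; auto.
      - split; auto; apply clamp_in; auto.
      - rewrite Rminus_eq_0, Rabs_R0; auto.
      - eapply Rle_lt_trans; [apply clamp_lip; auto| auto]. }
    exists (clamp c d xm). split; [apply clamp_in; auto|].
    intros x Hx. specialize (Hxm2 x Hx). rewrite clamp_id in Hxm2; auto. }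
  set (xm := fun t => proj1_sig (constructive_indefinite_description _ (Ex t))).
  assert (Hxm : forall t, c <= xm t <= d /\
     forall x, c <= x <= d -> f (clamp a b t) x <= f (clamp a b t) (xm t)).
  { intros t. exact (proj2_sig (constructive_indefinite_description _ (Ex t))). }
  set (M := fun t => f (clamp a b t) (xm t)).
  destruct (continuity_ab_maj M a b hab) as [ta [Hta2 Hta1]].
  { intros z _. apply ed_cont_pt. intros eps Heps.
    destruct (U (eps/2) ltac:(lra)) as [dd [Hdd Hu]]. exists dd; split; auto.
    intros y Hy. unfold M.
    assert (Hc : Rabs (clamp a b y - clamp a b z) < dd)
      by (eapply Rle_lt_trans; [apply clamp_lip; auto| auto]).
    destruct (Hxm y) as [Hy1 Hy2]. destruct (Hxm z) as [Hz1 Hz2].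
    assert (C1 := clamp_in a b y hab). assert (C2 := clamp_in a b z hab).
    assert (E1 : Rabs (f (clamp a b y) (xm z) - f (clamp a b z) (xm z)) < eps/2).
    { apply Hu; try (split; auto); auto. rewrite Rminus_eq_0, Rabs_R0; auto. }
    assert (E2 : Rabs (f (clamp a b y) (xm y) - f (clamp a b z) (xm y)) < eps/2).
    { apply Hu; try (split; auto); auto. rewrite Rminus_eq_0, Rabs_R0; auto. }
    specialize (Hy2 (xm z) Hz1). specialize (Hz2 (xm y) Hy1).
    apply Rabs_def2 in E1. apply Rabs_def2 in E2. apply Rabs_def1; lra. }
  exists (clamp a b ta), (xm ta). split.
  - split; [apply clamp_in; auto| apply Hxm].
  - intros t x [Ht Hx]. specialize (Hta2 t Ht). unfold M in Hta2.
    rewrite (clamp_id a b t Ht) in Hta2.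
    destruct (Hxm t) as [_ H2]. specialize (H2 x Hx). rewrite (clamp_id a b t Ht) in H2.
    lra.
Qed.
Lemma deriv_sign f c l : is_derive f c l -> l <> 0 ->
  exists d, 0 < d /\ forall h, h <> 0 -> Rabs h < d -> 0 < (f (c + h) - f c) * h * l.
Proof.
  intros H Hl. apply is_derive_Reals in H.
  assert (Hl2 : 0 < Rabs l / 2) by (assert (0 < Rabs l) by (apply Rabs_pos_lt; auto); lra).
  destruct (H _ Hl2) as [d Hd]. exists d; split; [apply cond_pos|].
  intros h Hh Hhd. specialize (Hd h Hh Hhd).
  set (q := (f (c + h) - f c) / h) in *.
  assert (E : (f (c + h) - f c) = q * h) by (unfold q; field; auto).
  rewrite E.
  assert (0 < q * l).
  { apply Rabs_def2 in Hd. unfold Rabs in Hd. destruct (Rcase_abs l); nra. }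
  assert (0 < h * h) by (destruct (Rlt_or_le 0 h); [nra| assert (h < 0) by lra; nra]).
  nra.
Qed.

Lemma MP rho mu sig t1 R w Dt D1 D2 : 0 < rho -> 0 < t1 -> 0 < R ->
  (forall t x, rect 0 t1 0 R t x -> epsdelta2 (rect 0 t1 0 R) w t x) ->
  (forall t x, 0 < t <= t1 -> 0 < x < R ->
     is_derive (fun s => w s x) t (Dt t x) /\
     (forall y, 0 < y < R -> is_derive (fun z => w t z) y (D1 t y)) /\
     is_derive (fun y => D1 t y) x (D2 t x) /\
     rho * w t x + Dt t x - mu * D1 t x - / 2 * sig ^ 2 * D2 t x <= 0) ->
  (forall x, 0 <= x <= R -> w 0 x <= 0) ->
  (forall t, 0 <= t <= t1 -> w t 0 <= 0) ->
  (forall t, 0 <= t <= t1 -> w t R <= 0) ->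
  forall t x, rect 0 t1 0 R t x -> w t x <= 0.
Proof.
  intros Hrho Ht1 HR Hc Hd H0 HB HR' t x Hr.
  apply Rnot_lt_le. intro Hpos.
  destruct (EVT2 0 t1 0 R w ltac:(lra) ltac:(lra) Hc) as [ta [xa [[Hta Hxa] Hmax]]].
  assert (Hm := Hmax t x Hr).
  assert (ta <> 0) by (intro E; subst ta; specialize (H0 xa Hxa); lra).
  assert (xa <> 0) by (intro E; subst xa; specialize (HB ta Hta); lra).
  assert (xa <> R) by (intro E; subst xa; specialize (HR' ta Hta); lra).
  assert (Ht' : 0 < ta <= t1) by lra. assert (Hx' : 0 < xa < R) by lra.
  destruct (Hd ta xa Ht' Hx') as [HDt [HD1 [HD2 Hpde]]].
  assert (E1 : D1 ta xa = 0).
  { destruct (Req_dec (D1 ta xa) 0) as [e|ne]; auto. exfalso.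
    destruct (deriv_sign _ _ _ (HD1 xa Hx') ne) as [d [Hd0 Hs]].
    set (eta := Rmin d (Rmin xa (R - xa)) / 2).
    assert (0 < eta /\ eta < d /\ eta < xa /\ eta < R - xa) by
      (unfold eta; unfold Rmin; repeat destruct Rle_dec; lra).
    destruct (Rlt_or_le 0 (D1 ta xa)) as [lp|ln].
    - specialize (Hs eta ltac:(lra) ltac:(rewrite Rabs_pos_eq; lra)).
      assert (w ta (xa + eta) <= w ta xa) by (apply Hmax; split; lra).
      assert (0 < eta * D1 ta xa) by nra. rewrite Rmult_assoc in Hs. nra.
    - specialize (Hs (- eta) ltac:(lra) ltac:(rewrite Rabs_Ropp, Rabs_pos_eq; lra)).
      assert (w ta (xa + - eta) <= w ta xa) by (apply Hmax; split; lra).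
      assert (D1 ta xa < 0) by lra.
      assert (0 < - eta * D1 ta xa) by nra. rewrite Rmult_assoc in Hs. nra. }
  assert (Et : 0 <= Dt ta xa).
  { apply Rnot_lt_le; intro ln.
    destruct (deriv_sign _ _ _ HDt ltac:(lra)) as [d [Hd0 Hs]].
    set (eta := Rmin d ta / 2).
    assert (eta < d /\ eta < ta /\ 0 < eta) by
      (unfold eta; unfold Rmin; repeat destruct Rle_dec; lra).
    specialize (Hs (- eta) ltac:(lra) ltac:(rewrite Rabs_Ropp, Rabs_pos_eq; lra)).
    assert (w (ta + - eta) xa <= w ta xa) by (apply Hmax; split; lra).
    assert (0 < - eta * Dt ta xa) by nra. rewrite Rmult_assoc in Hs. nra. }
  assert (E2 : D2 ta xa <= 0).
  { apply Rnot_lt_le; intro lp.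
    destruct (deriv_sign _ _ _ HD2 ltac:(lra)) as [d [Hd0 Hs]].
    set (eta := Rmin d (R - xa) / 2).
    assert (eta < d /\ eta < R - xa /\ 0 < eta) by
      (unfold eta; unfold Rmin; repeat destruct Rle_dec; lra).
    destruct (MVT_cor2 (fun z => w ta z) (fun z => D1 ta z) xa (xa + eta) ltac:(lra))
      as [cc [Hcc1 Hcc2]].
    { intros cc Hcc. apply is_derive_Reals. apply HD1. lra. }
    specialize (Hs (cc - xa) ltac:(lra) ltac:(rewrite Rabs_pos_eq; lra)).
    replace (xa + (cc - xa)) with cc in Hs by ring.
    rewrite E1 in Hs.
    assert (0 < (cc - xa) * D2 ta xa) by nra. rewrite Rminus_0_r, Rmult_assoc in Hs.
    assert (0 < D1 ta cc) by nra.
    assert (w ta (xa + eta) <= w ta xa) by (apply Hmax; split; lra).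
    nra. }
  assert (0 <= sig ^ 2) by apply pow2_ge_0.
  rewrite E1 in Hpde.
  assert (w ta xa > 0) by lra.
  nra.
Qed.
Lemma c2_minus (f g : R * R -> R) p : continuous f p -> continuous g p ->
  continuous (fun q => f q - g q) p.
Proof. intros; apply (continuous_minus f g); auto. Qed.
Lemma c2_opp (f : R * R -> R) p : continuous f p -> continuous (fun q => - f q) p.
Proof. intros; apply (continuous_opp f); auto. Qed.
Lemma c2_pow2 (f : R * R -> R) p : continuous f p -> continuous (fun q => f q ^ 2) p.
Proof.
  intros H. apply (continuous_ext (fun q => f q * (f q * 1))).
  { intros; simpl; ring. } apply c2_mult; auto. apply c2_mult; auto. apply c2_const.
Qed.

Lemma is_derive_sdiff (f g : R -> R) x s df dg :
  is_derive f x df -> is_derive g x dg ->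
  is_derive (fun z => s * (f z - g z)) x (s * (df - dg)).
Proof.
  intros Hf Hg. apply (is_derive_scal (fun z => f z - g z)).
  apply (is_derive_minus f g x df dg Hf Hg).
Qed.

Definition gbar (rho mu sigma s a C D x0 lam : R) (t x : R) : R :=
  exp (- rho * t) * (a + s * (C * exp t * ((x - x0) ^ 2 + (sigma ^ 2 + mu ^ 2) * t)
     + D * exp (- lam * x + sigma ^ 2 * lam ^ 2 / 2 * t))).

Ltac c2tac :=
  lazymatch goal with
  | |- continuous (fun q => fst q) _ => apply c2_fst
  | |- continuous (fun q => snd q) _ => apply c2_snd
  | |- continuous (fun q => @?f q + @?g q) _ => apply (c2_plus f g); c2tac
  | |- continuous (fun q => @?f q - @?g q) _ => apply (c2_minus f g); c2tac
  | |- continuous (fun q => @?f q * @?g q) _ => apply (c2_mult f g); c2tac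
  | |- continuous (fun q => - @?f q) _ => apply (c2_opp f); c2tac
  | |- continuous (fun q => exp (@?f q)) _ => apply (c2_exp f); c2tac
  | |- continuous (fun q => (@?f q) ^ 2) _ => apply (c2_pow2 f); c2tac
  | |- continuous (fun q => _) _ => apply c2_const
  end.

Lemma gbar_cont rho mu sigma s a C D x0 lam t x :
  continuous (fun p : R * R => gbar rho mu sigma s a C D x0 lam (fst p) (snd p)) (t, x).
Proof.
  unfold gbar.
  c2tac.
Qed.

Lemma barrier (mu sigma rho T : R) (vn : R -> R -> R) (t1 Rr s a C D x0 lam : R) :
  0 < rho -> 0 < mu -> 0 < t1 < T -> 0 < Rr -> s * s = 1 -> 0 <= C -> 0 <= D -> 0 <= lam ->
  smooth_on_Q T vn -> cont_on_Qbar T vn ->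
  (forall t x, inQ T t x ->
     rho * vn t x + Derive (fun s => vn s x) t - mu * Derive (fun y => vn t y) x
     - / 2 * sigma ^ 2 * Derive (fun y => Derive (fun z => vn t z) y) x = 0) ->
  (forall x, 0 <= x <= Rr -> s * (vn 0 x - gbar rho mu sigma s a C D x0 lam 0 x) <= 0) ->
  (forall t, 0 <= t <= t1 -> s * (vn t 0 - gbar rho mu sigma s a C D x0 lam t 0) <= 0) ->
  (forall t, 0 <= t <= t1 -> s * (vn t Rr - gbar rho mu sigma s a C D x0 lam t Rr) <= 0) ->
  forall t x, 0 <= t <= t1 -> 0 <= x <= Rr ->
    s * (vn t x - gbar rho mu sigma s a C D x0 lam t x) <= 0.
Proof.
  intros Hrho Hmu Ht1 HRr Hs HC HD Hlam Hsm Hc Hp Hi Hb Hr t x Ht Hx.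
  set (g := gbar rho mu sigma s a C D x0 lam).
  set (kap := sigma ^ 2 + mu ^ 2). set (gam := sigma ^ 2 * lam ^ 2 / 2).
  set (gt := fun t x => - rho * g t x + exp (- rho * t) * s * (C * exp t * ((x - x0) ^ 2 + kap * t + kap)
        + D * gam * exp (- lam * x + gam * t))).
  set (gx := fun t x => exp (- rho * t) * s * (C * exp t * (2 * (x - x0))
        - D * lam * exp (- lam * x + gam * t))).
  set (gxx := fun t x => exp (- rho * t) * s * (C * exp t * 2
        + D * lam ^ 2 * exp (- lam * x + gam * t))).
  assert (Gt : forall t x, is_derive (fun u => g u x) t (gt t x)).
  { intros u y. unfold gt, g, gbar. fold kap. fold gam. auto_derive; auto. ring. }
  assert (Gx : forall t x, is_derive (fun y => g t y) x (gx t x)).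
  { intros u y. unfold gx, g, gbar. fold kap. fold gam. auto_derive; auto. ring. }
  assert (Gxx : forall t x, is_derive (fun y => gx t y) x (gxx t x)).
  { intros u y. unfold gx, gxx. auto_derive; auto. ring. }
  apply (MP rho mu sigma t1 Rr (fun t x => s * (vn t x - g t x))
     (fun t x => s * (Derive (fun u => vn u x) t - gt t x))
     (fun t y => s * (Derive (fun z => vn t z) y - gx t y))
     (fun t x => s * (Derive (fun y => Derive (fun z => vn t z) y) x - gxx t x)));
    auto; try lra.
  - intros u y [Hu Hy]. apply ed_scal; auto. apply ed_minus.
    + apply (ed_mono (inQbar T)). { intros a0 b0 [? ?]; split; lra. }
      apply within_ed. apply Hc. split; lra.
    + apply cont_ed. apply gbar_cont.
  - intros u y Hu Hy.
    assert (HQ : inQ T u y) by (split; lra).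
    split; [|split; [|split]].
    + apply is_derive_sdiff; auto.
      destruct (Hsm nil u y HQ) as [_ [H1 _]]. simpl in H1. apply Derive_correct; auto.
    + intros z Hz. assert (HQ' : inQ T u z) by (split; lra).
      apply is_derive_sdiff; auto.
      destruct (Hsm nil u z HQ') as [_ [_ H1]]. simpl in H1. apply Derive_correct; auto.
    + apply is_derive_sdiff; auto.
      destruct (Hsm (cons false nil) u y HQ) as [_ [_ H1]]. simpl in H1. apply Derive_correct; auto.
    + specialize (Hp u y HQ).
      assert (E : rho * (s * (vn u y - g u y)) + s * (Derive (fun u0 => vn u0 y) u - gt u y) -
        mu * (s * (Derive (fun z => vn u z) y - gx u y)) -
        / 2 * sigma ^ 2 * (s * (Derive (fun y0 => Derive (fun z => vn u z) y0) y - gxx u y))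
        = - (s * s) * exp (- rho * u) * (C * exp u * ((y - x0 - mu) ^ 2 + kap * u)
           + D * mu * lam * exp (- lam * y + gam * u))).
      { set (V := vn u y) in *. set (Vt := Derive (fun u0 => vn u0 y) u) in *.
        set (Vx := Derive (fun z => vn u z) y) in *.
        set (Vxx := Derive (fun y0 => Derive (fun z => vn u z) y0) y) in *.
        replace Vt with (- rho * V + mu * Vx + / 2 * sigma ^ 2 * Vxx) by lra.
        unfold gt, gx, gxx, g, gbar, kap, gam. field. }
      rewrite E. rewrite Hs.
      assert (0 < exp (- rho * u)) by apply exp_pos.
      assert (0 < exp u) by apply exp_pos.
      assert (0 < exp (- lam * y + gam * u)) by apply exp_pos.
      assert (0 <= (y - x0 - mu) ^ 2) by apply pow2_ge_0.
      assert (0 <= kap) by (unfold kap; assert (0 <= sigma^2) by apply pow2_ge_0;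
         assert (0 <= mu^2) by apply pow2_ge_0; lra).
      assert (0 <= C * exp u * ((y - x0 - mu) ^ 2 + kap * u)).
      { apply Rmult_le_pos; [apply Rmult_le_pos; lra|]. assert (0 <= kap * u) by (apply Rmult_le_pos; lra). lra. }
      assert (0 <= D * mu * lam * exp (- lam * y + gam * u)).
      { repeat apply Rmult_le_pos; lra. }
      assert (0 <= exp (- rho * u) * (C * exp u * ((y - x0 - mu) ^ 2 + kap * u) +
        D * mu * lam * exp (- lam * y + gam * u))) by (apply Rmult_le_pos; lra).
      lra.
split; lra. Qed.
Lemma lub_facts (h : R -> R) (y : R) :
  Finite y = rbar_pos (Lub_Rbar (fun r => exists z, 0 < z /\ r = h z)) ->
  (forall z, 0 < z -> h z <= y) /\
  (forall K0, 0 <= K0 -> (forall z, 0 < z -> h z <= K0) -> y <= K0) /\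
  (0 < y -> forall eta, 0 < eta -> exists z, 0 < z /\ y - eta < h z) /\
  0 <= y.
Proof.
  intros Hy. destruct (Lub_Rbar_correct (fun r => exists z, 0 < z /\ r = h z)) as [Hub Hlub].
  destruct (Lub_Rbar (fun r => exists z, 0 < z /\ r = h z)) as [a| |] eqn:E;
    simpl in Hy; try discriminate.
  - injection Hy as Hy. subst y.
    split; [|split; [|split]].
    + intros z Hz. specialize (Hub (h z) (ex_intro _ z (conj Hz eq_refl))). simpl in Hub.
      apply Rle_trans with a; auto. apply Rmax_l.
    + intros K0 HK0 HK. assert (Rbar_le a K0).
      { apply Hlub. intros r [z [Hz ->]]. simpl. auto. }
      simpl in H. apply Rmax_lub; auto.
    + intros Hpos eta Heta. apply NNPP; intro Hn.
      assert (Ha : Rmax a 0 = a) by (unfold Rmax in *; destruct Rle_dec; lra).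
      assert (Rbar_le a (a - eta)).
      { apply Hlub. intros r [z [Hz ->]]. simpl. apply Rnot_lt_le. intro Hl.
        apply Hn. exists z; split; auto. lra. }
      simpl in H; lra.
    + apply Rmax_r.
  - injection Hy as Hy. subst y. split; [|split; [|split]].
    + intros z Hz. specialize (Hub (h z) (ex_intro _ z (conj Hz eq_refl))). simpl in Hub. contradiction.
    + intros; lra.
    + intros; lra.
    + lra.
Qed.

Lemma cost_pos lf lp z : 0 < z -> cost lf lp z = lf + (1 + lp) * z.
Proof. intros; unfold cost; destruct Rlt_dec; lra. Qed.

Lemma ed1 (phi : R -> R) x :
  filterlim phi (within (fun y => 0 <= y) (locally x)) (locally (phi x)) ->
  forall eps, 0 < eps -> exists d, 0 < d /\ forall y, 0 <= y -> Rabs (y - x) < d ->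
     Rabs (phi y - phi x) < eps.
Proof.
  intros H eps Heps.
  destruct (proj1 (filterlim_locally _ _) H (mkposreal eps Heps)) as [d Hd].
  exists d; split; [apply cond_pos|]. intros y Hy Hyd.
  specialize (Hd y). assert (B : ball x d y) by (apply ballR; auto).
  specialize (Hd B Hy). apply ballR in Hd. exact Hd.
Qed.

Lemma mono_tail (g : R -> R) A : (forall x y, 0 <= x -> x <= y -> g x <= g y) ->
  (forall x, 0 <= x -> 0 <= g x <= A) ->
  forall e, 0 < e -> exists X, 0 <= X /\ forall y, X <= y -> g y <= g X + e.
Proof.
  intros Hm Hb e He. apply NNPP; intro Hn.
  assert (Hk : forall k : nat, exists X, 0 <= X /\ INR k * e <= g X).
  { induction k.
    - exists 0; split; [lra|]. simpl. specialize (Hb 0 ltac:(lra)). lra.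
    - destruct IHk as [X [HX HgX]].
      destruct (not_all_ex_not _ _ (fun H => Hn (ex_intro _ X (conj HX H)))) as [y Hy].
      apply imply_to_and in Hy. destruct Hy as [Hy1 Hy2].
      exists y; split; [lra|]. rewrite S_INR. lra. }
  destruct (INR_archimed e A He) as [k Hk2].
  destruct (Hk k) as [X [HX HgX]]. specialize (Hb X HX). lra.
Qed.

Lemma phi_uc (phi : R -> R) A :
  (forall x, 0 <= x ->
     filterlim phi (within (fun y => 0 <= y) (locally x)) (locally (phi x))) ->
  (forall x y, 0 <= x -> x <= y -> phi x - x <= phi y - y) ->
  (forall x, 0 <= x -> 0 <= phi x - x <= A) ->
  forall e, 0 < e -> exists d, 0 < d /\ forall x y, 0 <= x -> 0 <= y -> Rabs (y - x) < d ->
     Rabs (phi y - phi x) <= e.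
Proof.
  intros Hc Hm Hb e He.
  destruct (mono_tail (fun x => phi x - x) A Hm Hb (e/2) ltac:(lra)) as [X [HX HXt]].
  destruct (UC2 0 0 0 (X + 1) (fun _ x => phi x)) with (eps := e) as [d [Hd Hu]]; auto.
  { intros t x [_ Hx] eps Heps. destruct (ed1 phi x (Hc x ltac:(lra)) eps Heps) as [d [Hd H]].
    exists d; split; auto. intros t' x' [_ Hx'] _ Hxx. apply H; auto. lra. }
  exists (Rmin d (Rmin 1 (e/2))); split.
  { unfold Rmin; repeat destruct Rle_dec; lra. }
  intros x y Hx Hy Hxy.
  assert (Hm1 : Rabs (y - x) < d) by (eapply Rlt_le_trans; [exact Hxy| apply Rmin_l]).
  assert (Hm2 : Rabs (y - x) < 1) by (eapply Rlt_le_trans; [exact Hxy|];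
     eapply Rle_trans; [apply Rmin_r| apply Rmin_l]).
  assert (Hm3 : Rabs (y - x) < e/2) by (eapply Rlt_le_trans; [exact Hxy|];
     eapply Rle_trans; [apply Rmin_r| apply Rmin_r]).
  destruct (Rle_dec x (X + 1)) as [h1|h1]; destruct (Rle_dec y (X + 1)) as [h2|h2].
  - left. apply (Hu 0 y 0 x); try (split; lra); try lra.
    rewrite Rminus_eq_0, Rabs_R0; lra.
  - assert (X <= x) by (apply Rabs_def2 in Hm2; lra).
    assert (X <= y) by lra.
    assert (A1 := HXt x H). assert (A2 := HXt y H0).
    assert (B1 := Hm X x HX H). assert (B2 := Hm X y HX H0).
    apply Rabs_def2 in Hm3. apply Rabs_le; lra.
  - assert (X <= y) by (apply Rabs_def2 in Hm2; lra).
    assert (X <= x) by lra.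
    assert (A1 := HXt x H0). assert (A2 := HXt y H).
    assert (B1 := Hm X x HX H0). assert (B2 := Hm X y HX H).
    apply Rabs_def2 in Hm3. apply Rabs_le; lra.
  - assert (X <= y) by lra. assert (X <= x) by lra.
    assert (A1 := HXt x H0). assert (A2 := HXt y H).
    assert (B1 := Hm X x HX H0). assert (B2 := Hm X y HX H).
    apply Rabs_def2 in Hm3. apply Rabs_le; lra.
Qed.

Lemma phi_env (phi : R -> R) A :
  (forall x, 0 <= x ->
     filterlim phi (within (fun y => 0 <= y) (locally x)) (locally (phi x))) ->
  (forall x y, 0 <= x -> x <= y -> phi x - x <= phi y - y) ->
  (forall x, 0 <= x -> 0 <= phi x - x <= A) ->
  forall e, 0 < e -> exists C, 0 < C /\ forall x y, 0 <= x -> 0 <= y ->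
     Rabs (phi y - phi x) <= e + C * (y - x) ^ 2.
Proof.
  intros Hc Hm Hb e He.
  destruct (phi_uc phi A Hc Hm Hb e He) as [d [Hd Hu]].
  assert (HA : 0 <= A) by (specialize (Hb 0 ltac:(lra)); lra).
  exists (/ d + A / (d * d)). split.
  { assert (0 < / d) by (apply Rinv_0_lt_compat; auto).
    assert (0 <= A / (d * d)) by (apply Rdiv_le_0_compat; nra). lra. }
  intros x y Hx Hy.
  destruct (Rlt_or_le (Rabs (y - x)) d) as [h|h].
  - specialize (Hu x y Hx Hy h). assert (0 <= (/ d + A / (d * d)) * (y - x) ^ 2).
    { apply Rmult_le_pos; [|apply pow2_ge_0].
      assert (0 < / d) by (apply Rinv_0_lt_compat; auto).
      assert (0 <= A / (d * d)) by (apply Rdiv_le_0_compat; nra). lra. }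
    lra.
  - assert (E1 : Rabs (phi y - phi x) <= Rabs (y - x) + A).
    { specialize (Hb x Hx) as B1. specialize (Hb y Hy) as B2. apply Rabs_le.
      unfold Rabs; destruct Rcase_abs; lra. }
    assert (E2 : (y - x) ^ 2 = Rabs (y - x) * Rabs (y - x)).
    { rewrite <- Rabs_mult, Rabs_pos_eq; [simpl; ring| apply Rle_0_sqr]. }
    rewrite E2. set (r := Rabs (y - x)) in *.
    assert (r / d >= 1).
    { unfold Rdiv; apply Rle_ge; rewrite <- (Rinv_r d) by lra; apply Rmult_le_compat_r; [left; apply Rinv_0_lt_compat; lra| lra]. }
    assert (Er : (/ d + A / (d * d)) * (r * r) = r * (r / d) + A * ((r / d) * (r / d))) by (field; lra).
    rewrite Er.
    assert (r <= r * (r / d)) by nra.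
    assert (1 <= (r / d) * (r / d)) by nra.
    assert (A <= A * ((r / d) * (r / d))) by nra.
    lra.
Qed.
Lemma exp_le_exp x y : x <= y -> exp x <= exp y.
Proof. intros [H|H]; [left; apply exp_increasing; auto| subst; lra]. Qed.

Lemma exp_le2 x : x <= / 2 -> exp x <= 2.
Proof.
  intros H. rewrite <- (exp_ln 2) by lra. apply exp_le_exp. assert (L := ln_lt_2). lra.
Qed.

Lemma exp_neg_lb x : 1 - x <= exp (- x).
Proof. assert (H := exp_ineq1_le (- x)). lra. Qed.

Lemma exp_m1 x : 0 <= x <= / 2 -> exp x - 1 <= 2 * x.
Proof.
  intros H. assert (H1 := exp_neg_lb x).
  assert (E : exp x * exp (- x) = 1) by (rewrite <- exp_plus; replace (x + - x) with 0 by ring; apply exp_0).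
  assert (0 < exp x) by apply exp_pos.
  assert (exp x * (1 - x) <= 1) by nra.
  assert (exp x <= 2) by (apply exp_le2; lra).
  nra.
Qed.

Lemma exp_ge1 x : 0 <= x -> 1 <= exp x.
Proof. intros; assert (Hh := exp_ineq1_le x); lra. Qed.

Lemma exp_le1 x : x <= 0 -> exp x <= 1.
Proof. intros; rewrite <- exp_0; apply exp_le_exp; lra. Qed.

Lemma exp_mhalf x : x <= -1 -> exp x <= / 2.
Proof.
  intros H. assert (exp x <= exp (-1)) by (apply exp_le_exp; lra).
  assert (E : exp (-1) = / exp 1) by (rewrite <- exp_Ropp; reflexivity).
  assert (2 <= exp 1) by (assert (h := exp_ineq1_le 1); lra).
  assert (/ exp 1 <= / 2) by (apply Rinv_le_contravar; lra). lra.
Qed.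

Lemma exp_inv t : exp (- t) * exp t = 1.
Proof. rewrite <- exp_plus; replace (- t + t) with 0 by ring; apply exp_0. Qed.

Ltac minle := first [ apply Rle_refl | apply Rmin_l | eapply Rle_trans; [apply Rmin_r| minle] ].

Lemma gbar_t0 rho mu sigma s a C D x0 lam x :
  gbar rho mu sigma s a C D x0 lam 0 x = a + s * (C * (x - x0) ^ 2 + D * exp (- lam * x)).
Proof.
  unfold gbar. replace (- rho * 0) with 0 by ring.
  replace (- lam * x + sigma ^ 2 * lam ^ 2 / 2 * 0) with (- lam * x) by ring.
  rewrite exp_0. ring.
Qed.

Lemma Rabs_le_inv a b : Rabs a <= b -> - b <= a <= b.
Proof. unfold Rabs; destruct Rcase_abs; intros; lra. Qed.

Lemma core
  (mu sigma rho T lf lp A : R) (phi : R -> R) (v : nat -> R -> R -> R)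
  (hmu : 0 < mu) (hsigma : 0 < sigma) (hrho : 0 < rho) (hT : 0 < T)
  (hlf : 0 < lf) (hlp : 0 < lp)
  (hphi : in_CA lf lp A phi)
  (hsmooth : forall n, (1 <= n)%nat -> smooth_on_Q T (v n))
  (hcont : forall n, (1 <= n)%nat -> cont_on_Qbar T (v n))
  (hpde : forall n, (1 <= n)%nat -> forall t x, inQ T t x ->
     rho * v n t x
     + Derive (fun s => v n s x) t
     - mu * Derive (fun y => v n t y) x
     - / 2 * sigma ^ 2 * Derive (fun y => Derive (fun z => v n t z) y) x = 0)
  (hinit : forall n, (1 <= n)%nat -> forall x, 0 <= x -> v n 0 x = phi x)
  (hbdry : forall n, (1 <= n)%nat -> forall t, 0 <= t <= T ->
     Finite (v n t 0) = rbar_pos (Iop lf lp (fun y => v (n - 1)%nat t y) 0))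
  (hbounds : forall n, (1 <= n)%nat -> forall t x, inQbar T t x ->
     exp (- rho * t) * x <= v n t x <= exp (- rho * t) * (x + A + mu * t)) :
  forall eps, 0 < eps -> exists d, 0 < d /\ d < T /\ forall n, (1 <= n)%nat ->
    forall t x, 0 <= t <= d -> 0 <= x -> Rabs (exp (rho * t) * v n t x - phi x) <= eps.
Proof.
  intros eps Heps.
  destruct hphi as [Hc [Hmon [Hnn [HI [H0 [Hg Hb]]]]]].
  assert (HA : 0 <= A) by (specialize (Hb 0 ltac:(lra)); lra).
  set (e := Rmin (eps / 18) (lf / 2)).
  assert (He : 0 < e) by (unfold e; apply Rmin_pos; lra).
  assert (He1 : e <= eps / 18) by (unfold e; apply Rmin_l).
  assert (He2 : e <= lf / 2) by (unfold e; apply Rmin_r).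
  destruct (phi_env phi A Hc Hg Hb e He) as [C [HC Henv]].
  set (kap := sigma ^ 2 + mu ^ 2).
  assert (Hkap : 0 < kap) by (unfold kap; assert (0 < sigma^2) by (apply pow_lt; lra);
     assert (0 <= mu^2) by apply pow2_ge_0; lra).
  destruct (ed1 phi 0 (Hc 0 ltac:(lra)) (lf / 2) ltac:(lra)) as [d0 [Hd0 Hphi0]].
  set (lam := 4 / d0).
  assert (Hlam : 0 < lam) by (unfold lam; apply Rdiv_lt_0_compat; lra).
  set (gam := sigma ^ 2 * lam ^ 2 / 2).
  assert (Hgam : 0 <= gam) by (unfold gam; assert (0 <= sigma^2) by apply pow2_ge_0;
     assert (0 <= lam^2) by apply pow2_ge_0; nra).
  set (Zc := lf + (1 + lp) * (A / lp)).
  assert (HZc : 0 <= Zc) by (unfold Zc; assert (0 <= A / lp) by (apply Rdiv_le_0_compat; lra); nra).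
  set (p0 := phi 0).
  assert (Hp0 : 0 <= p0) by (apply Hnn; lra).
  assert (hv1 := within_ed _ _ _ _ (hcont 1%nat (le_n 1) 0 0 ltac:(split; lra))).
  destruct (hv1 (e / 2) ltac:(lra)) as [dv [Hdv Hv1]].
  rewrite (hinit 1%nat (le_n 1) 0 ltac:(lra)) in Hv1. fold p0 in Hv1.
  set (t1 := Rmin (T / 2) (Rmin (dv / 2) (Rmin (Rinv 2) (Rmin (e / (2 * C * kap + 1))
     (Rmin (Rinv (2 * gam + 1)) (Rmin (Rinv (2 * rho + 1)) (Rmin (e / (2 * rho * Zc + 1))
       (e / (2 * rho * (p0 + e) + 1))))))))).
  assert (Ht1 : 0 < t1).
  { unfold t1. repeat apply Rmin_pos; try lra;
    try (apply Rdiv_lt_0_compat; [lra|]); try apply Rinv_0_lt_compat;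
    try (assert (0 < C * kap) by (apply Rmult_lt_0_compat; lra));
    try (assert (0 <= rho * Zc) by (apply Rmult_le_pos; lra));
    try (assert (0 <= rho * (p0 + e)) by (apply Rmult_le_pos; lra)); nra. }
  assert (T1a : t1 <= T / 2) by (unfold t1; minle).
  assert (T1b : t1 <= dv / 2) by (unfold t1; minle).
  assert (T1c : t1 <= / 2) by (unfold t1; minle).
  assert (T1d : t1 <= e / (2 * C * kap + 1)) by (unfold t1; minle).
  assert (T1e : t1 <= / (2 * gam + 1)) by (unfold t1; minle).
  assert (T1f : t1 <= / (2 * rho + 1)) by (unfold t1; minle).
  assert (T1g : t1 <= e / (2 * rho * Zc + 1)) by (unfold t1; minle).
  assert (T1h : t1 <= e / (2 * rho * (p0 + e) + 1)) by (unfold t1; minle).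
  clearbody t1.
  assert (Ft : forall t, 0 <= t <= t1 ->
     exp t <= 2 /\ C * exp t * (kap * t) <= e /\ (exp (gam * t) <= 2 /\ gam * t <= / 2) /\ rho * t <= / 2 /\
     (exp (rho * t) - 1) * Zc <= e /\ rho * t * (p0 + e) <= e / 2).
  { intros t Ht.
    assert (E1 : exp t <= 2) by (apply exp_le2; lra).
    split; [auto|]. split.
    { assert (t * (2 * C * kap + 1) <= e).
      { apply Rle_trans with (t1 * (2 * C * kap + 1)).
        - apply Rmult_le_compat_r; [nra| lra].
        - apply Rle_trans with (e / (2 * C * kap + 1) * (2 * C * kap + 1)).
          + apply Rmult_le_compat_r; [nra| lra].
          + right; field; nra. }
      assert (0 <= C * kap * t) by (apply Rmult_le_pos; nra).
      assert (C * exp t * (kap * t) <= 2 * (C * kap * t)).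
      { replace (C * exp t * (kap * t)) with (exp t * (C * kap * t)) by ring.
        apply Rmult_le_compat_r; lra. }
      nra. }
    assert (G1 : gam * t <= / 2).
    { assert (t * (2 * gam + 1) <= 1).
      { apply Rle_trans with (t1 * (2 * gam + 1)).
        - apply Rmult_le_compat_r; [nra| lra].
        - apply Rle_trans with (/ (2 * gam + 1) * (2 * gam + 1)).
          + apply Rmult_le_compat_r; [nra| lra].
          + right; field; nra. }
      nra. }
    split; [split; [apply exp_le2; auto| auto]|].
    assert (R1 : rho * t <= / 2).
    { assert (t * (2 * rho + 1) <= 1).
      { apply Rle_trans with (t1 * (2 * rho + 1)).
        - apply Rmult_le_compat_r; [nra| lra].
        - apply Rle_trans with (/ (2 * rho + 1) * (2 * rho + 1)).
          + apply Rmult_le_compat_r; [nra| lra].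
          + right; field; nra. }
      nra. }
    split; [auto|]. split.
    { assert (X1 : exp (rho * t) - 1 <= 2 * (rho * t)) by (apply exp_m1; split; nra).
      assert (X2 : 0 <= exp (rho * t) - 1) by (assert (h := exp_ge1 (rho * t)); nra).
      assert (t * (2 * rho * Zc + 1) <= e).
      { apply Rle_trans with (t1 * (2 * rho * Zc + 1)).
        - apply Rmult_le_compat_r; [nra| lra].
        - apply Rle_trans with (e / (2 * rho * Zc + 1) * (2 * rho * Zc + 1)).
          + apply Rmult_le_compat_r; [nra| lra].
          + right; field; nra. }
      nra. }
    { assert (t * (2 * rho * (p0 + e) + 1) <= e).
      { apply Rle_trans with (t1 * (2 * rho * (p0 + e) + 1)).
        - apply Rmult_le_compat_r; [nra| lra].
        - apply Rle_trans with (e / (2 * rho * (p0 + e) + 1) * (2 * rho * (p0 + e) + 1)).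
          + apply Rmult_le_compat_r; [nra| lra].
          + right; field; nra. }
      nra. } }
  assert (V1b : forall t, 0 <= t <= t1 -> Rabs (v 1%nat t 0 - p0) < e / 2).
  { intros t Ht. apply Hv1.
    - split; [split; lra| lra].
    - rewrite Rminus_0_r, Rabs_pos_eq; lra.
    - rewrite Rminus_0_r, Rabs_R0; lra. }
  assert (Ht1T : t1 < T) by lra.
  assert (Hphib := lub_facts (fun z => phi (0 + z) - cost lf lp z) p0 H0).
  destruct Hphib as [Hphup [_ [Hphlow _]]].
  assert (Ustep : forall n, (1 <= n)%nat ->
     (forall t, 0 <= t <= t1 -> v n t 0 <= exp (- rho * t) * (p0 + e + C * exp t * (kap * t))) ->
     forall t x, 0 <= t <= t1 -> 0 <= x ->
       v n t x <= exp (- rho * t) * (phi x + e + C * exp t * (kap * t))).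
  { intros n Hn HB t x0 Ht Hx0.
    set (K := x0 + A + mu * T).
    assert (HK : 0 <= K) by (unfold K; nra).
    set (L := 1 + (1 + K) / C).
    assert (HL1 : 1 <= L) by (unfold L; assert (0 <= (1 + K) / C) by (apply Rdiv_le_0_compat; lra); lra).
    assert (HCL : C * L = C + (1 + K)) by (unfold L; field; lra).
    assert (HRr : x0 + L + A + mu * T <= C * L ^ 2).
    { replace (C * L ^ 2) with (L * (C * L)) by ring. rewrite HCL. unfold K in *. nra. }
    assert (Hbar := barrier mu sigma rho T (v n) t1 (x0 + L) 1 (phi x0 + e) C 0 x0 0
      hrho hmu (conj Ht1 Ht1T) ltac:(lra) ltac:(ring) ltac:(lra) ltac:(lra) ltac:(lra)
      (hsmooth n Hn) (hcont n Hn) (hpde n Hn)).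
    assert (Hfin : 1 * (v n t x0 - gbar rho mu sigma 1 (phi x0 + e) C 0 x0 0 t x0) <= 0).
    { apply Hbar; try lra.
      - intros x Hx. rewrite gbar_t0, (hinit n Hn x ltac:(lra)).
        assert (h := Rabs_le_inv _ _ (Henv x0 x Hx0 ltac:(lra))). lra.
      - intros u Hu. specialize (HB u Hu).
        assert (E : gbar rho mu sigma 1 (phi x0 + e) C 0 x0 0 u 0 =
           exp (- rho * u) * (p0 + e + C * exp u * (kap * u)) +
           exp (- rho * u) * ((phi x0 - p0) + C * exp u * x0 ^ 2)) by (unfold gbar, kap; ring).
        rewrite E.
        assert (0 <= exp (- rho * u) * ((phi x0 - p0) + C * exp u * x0 ^ 2)).
        { apply Rmult_le_pos; [left; apply exp_pos|].
          assert (p0 <= phi x0) by (apply Hmon; lra).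
          assert (0 <= C * exp u * x0 ^ 2) by (apply Rmult_le_pos; [apply Rmult_le_pos; [lra| left; apply exp_pos]| apply pow2_ge_0]).
          lra. }
        lra.
      - intros u Hu. assert (Hvb := proj2 (hbounds n Hn u (x0 + L) ltac:(split; lra))).
        assert (E : gbar rho mu sigma 1 (phi x0 + e) C 0 x0 0 u (x0 + L) =
           exp (- rho * u) * (phi x0 + e + C * exp u * L ^ 2 + C * exp u * (kap * u)))
           by (unfold gbar, kap; ring).
        rewrite E.
        assert (x0 + L + A + mu * u <= phi x0 + e + C * exp u * L ^ 2 + C * exp u * (kap * u)).
        { assert (0 <= phi x0) by (apply Hnn; lra).
          assert (1 <= exp u) by (apply exp_ge1; lra).
          assert (0 <= C * L ^ 2) by (apply Rmult_le_pos; [lra| apply pow2_ge_0]).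
          assert (C * L ^ 2 <= C * exp u * L ^ 2) by nra.
          assert (0 <= C * exp u * (kap * u)) by (apply Rmult_le_pos; [apply Rmult_le_pos; [lra| left; apply exp_pos]| nra]).
          assert (mu * u <= mu * T) by nra. lra. }
        assert (0 < exp (- rho * u)) by apply exp_pos. nra. }
    assert (E : gbar rho mu sigma 1 (phi x0 + e) C 0 x0 0 t x0 =
       exp (- rho * t) * (phi x0 + e + C * exp t * (kap * t))) by (unfold gbar, kap; ring).
    rewrite E in Hfin. lra. }
  assert (Uall : forall k t x, 0 <= t <= t1 -> 0 <= x ->
     v (S k) t x <= exp (- rho * t) * (phi x + e + C * exp t * (kap * t))).
  { induction k.
    - apply Ustep; [lia|]. intros t Ht.
      specialize (V1b t Ht). apply Rabs_def2 in V1b.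
      destruct (Ft t Ht) as [_ [_ [_ [_ [_ F8]]]]].
      assert (X := exp_neg_lb (rho * t)). replace (- (rho * t)) with (- rho * t) in X by ring.
      assert (0 <= C * exp t * (kap * t)) by (apply Rmult_le_pos; [apply Rmult_le_pos; [lra| left; apply exp_pos]| nra]).
      assert (0 < exp (- rho * t)) by apply exp_pos.
      nra.
    - apply Ustep; [lia|]. intros t Ht.
      destruct (lub_facts (fun z => v (S (S k) - 1)%nat t (0 + z) - cost lf lp z) (v (S (S k)) t 0)
        (hbdry (S (S k)) ltac:(lia) t ltac:(lra))) as [_ [Hup _]].
      apply Hup.
      { assert (0 <= C * exp t * (kap * t)) by (apply Rmult_le_pos; [apply Rmult_le_pos; [lra| left; apply exp_pos]| nra]).
        apply Rmult_le_pos; [left; apply exp_pos| lra]. }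
      intros z Hz. change (S (S k) - 1)%nat with (S k). rewrite Rplus_0_l.
      specialize (IHk t z Ht ltac:(lra)). specialize (Hphup z Hz). rewrite Rplus_0_l in Hphup.
      rewrite (cost_pos lf lp z Hz) in *.
      assert (0 < exp (- rho * t)) by apply exp_pos.
      assert (exp (- rho * t) <= 1) by (apply exp_le1; nra).
      assert (0 <= lf + (1 + lp) * z) by nra.
      nra. }
  set (D := 8 * e).
  assert (HD : 0 <= D) by (unfold D; lra).
  assert (Lstep : forall n, (1 <= n)%nat ->
     (forall t, 0 <= t <= t1 -> exp (- rho * t) * (p0 - D) <= v n t 0) ->
     forall t x, 0 <= t <= t1 -> 0 <= x ->
       exp (- rho * t) * (phi x - e - C * exp t * (kap * t) - D * exp (- lam * x + gam * t))
         <= v n t x).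
  { intros n Hn HB t x0 Ht Hx0.
    assert (Hbar := barrier mu sigma rho T (v n) t1 (x0 + A + 1) (-1) (phi x0 - e) C D x0 lam
      hrho hmu (conj Ht1 Ht1T) ltac:(lra) ltac:(ring) ltac:(lra) HD ltac:(lra)
      (hsmooth n Hn) (hcont n Hn) (hpde n Hn)).
    assert (Hfin : -1 * (v n t x0 - gbar rho mu sigma (-1) (phi x0 - e) C D x0 lam t x0) <= 0).
    { apply Hbar; try lra.
      - intros x Hx. rewrite gbar_t0, (hinit n Hn x ltac:(lra)).
        assert (h := Rabs_le_inv _ _ (Henv x0 x Hx0 ltac:(lra))).
        assert (0 <= D * exp (- lam * x)) by (apply Rmult_le_pos; [lra| left; apply exp_pos]).
        lra.
      - intros u Hu. specialize (HB u Hu).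
        assert (E : gbar rho mu sigma (-1) (phi x0 - e) C D x0 lam u 0 =
           exp (- rho * u) * (p0 - D) - exp (- rho * u) * ((p0 - (phi x0 - e - C * x0 ^ 2))
             + C * (exp u - 1) * x0 ^ 2 + C * exp u * (kap * u) + D * (exp (gam * u) - 1))).
        { unfold gbar, kap, gam. replace (- lam * 0) with 0 by ring. rewrite Rplus_0_l. ring. }
        rewrite E.
        assert (0 <= exp (- rho * u) * ((p0 - (phi x0 - e - C * x0 ^ 2))
             + C * (exp u - 1) * x0 ^ 2 + C * exp u * (kap * u) + D * (exp (gam * u) - 1))).
        { apply Rmult_le_pos; [left; apply exp_pos|].
          assert (h := Rabs_le_inv _ _ (Henv 0 x0 ltac:(lra) Hx0)). fold p0 in h.
          rewrite Rminus_0_r in h.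
          assert (1 <= exp u) by (apply exp_ge1; lra).
          assert (1 <= exp (gam * u)) by (apply exp_ge1; nra).
          assert (0 <= C * (exp u - 1) * x0 ^ 2) by (apply Rmult_le_pos; [apply Rmult_le_pos; lra| apply pow2_ge_0]).
          assert (0 <= C * exp u * (kap * u)) by (apply Rmult_le_pos; [apply Rmult_le_pos; [lra| left; apply exp_pos]| nra]).
          assert (0 <= D * (exp (gam * u) - 1)) by (apply Rmult_le_pos; lra).
          lra. }
        lra.
      - intros u Hu. assert (Hvb := proj1 (hbounds n Hn u (x0 + A + 1) ltac:(split; lra))).
        assert (E : gbar rho mu sigma (-1) (phi x0 - e) C D x0 lam u (x0 + A + 1) =
           exp (- rho * u) * phi x0 - exp (- rho * u) * (e + C * exp u * ((A + 1) ^ 2 + kap * u)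
             + D * exp (- lam * (x0 + A + 1) + gam * u)))
           by (unfold gbar, kap, gam; ring).
        rewrite E.
        assert (0 <= exp (- rho * u) * (e + C * exp u * ((A + 1) ^ 2 + kap * u)
             + D * exp (- lam * (x0 + A + 1) + gam * u))).
        { apply Rmult_le_pos; [left; apply exp_pos|].
          assert (0 <= C * exp u * ((A + 1) ^ 2 + kap * u)).
          { apply Rmult_le_pos; [apply Rmult_le_pos; [lra| left; apply exp_pos]|].
            assert (0 <= (A + 1) ^ 2) by apply pow2_ge_0. nra. }
          assert (0 <= D * exp (- lam * (x0 + A + 1) + gam * u)) by (apply Rmult_le_pos; [lra| left; apply exp_pos]).
          lra. }
        assert (phi x0 <= x0 + A + 1) by (specialize (Hb x0 Hx0); lra).
        assert (exp (- rho * u) * phi x0 <= exp (- rho * u) * (x0 + A + 1))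
          by (apply Rmult_le_compat_l; [left; apply exp_pos| lra]).
        lra. }
    assert (E : gbar rho mu sigma (-1) (phi x0 - e) C D x0 lam t x0 =
       exp (- rho * t) * (phi x0 - e - C * exp t * (kap * t) - D * exp (- lam * x0 + gam * t)))
       by (unfold gbar, kap, gam; ring).
    rewrite E in Hfin. lra. }
  assert (Lall : forall k t x, 0 <= t <= t1 -> 0 <= x ->
     exp (- rho * t) * (phi x - e - C * exp t * (kap * t) - D * exp (- lam * x + gam * t))
         <= v (S k) t x).
  { induction k.
    - apply Lstep; [lia|]. intros t Ht.
      assert (Hv0 := proj1 (hbounds 1%nat (le_n 1) t 0 ltac:(split; lra))).
      rewrite Rmult_0_r in Hv0.
      assert (0 < exp (- rho * t)) by apply exp_pos.
      assert (exp (- rho * t) <= 1) by (apply exp_le1; nra).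
      destruct (Rle_lt_dec (p0 - D) 0) as [h|h].
      + assert (exp (- rho * t) * (p0 - D) <= 0) by nra. lra.
      + specialize (V1b t Ht). apply Rabs_def2 in V1b.
        assert (exp (- rho * t) * (p0 - D) <= p0 - D) by nra.
        unfold D in *. lra.
    - apply Lstep; [lia|]. intros t Ht.
      assert (Hv0 := proj1 (hbounds (S (S k)) ltac:(lia) t 0 ltac:(split; lra))).
      rewrite Rmult_0_r in Hv0.
      assert (HP : 0 < exp (- rho * t)) by apply exp_pos.
      destruct (Rle_lt_or_eq_dec 0 p0 Hp0) as [hp|hp].
      2:{ rewrite <- hp. assert (exp (- rho * t) * (0 - D) <= 0) by nra. lra. }
      destruct (Hphlow hp e He) as [z [Hz Hzq]]. rewrite Rplus_0_l, (cost_pos lf lp z Hz) in Hzq.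
      destruct (lub_facts (fun z => v (S (S k) - 1)%nat t (0 + z) - cost lf lp z) (v (S (S k)) t 0)
        (hbdry (S (S k)) ltac:(lia) t ltac:(lra))) as [Hlow _].
      specialize (Hlow z Hz). change (S (S k) - 1)%nat with (S k) in Hlow.
      rewrite Rplus_0_l, (cost_pos lf lp z Hz) in Hlow.
      assert (Hzd : d0 <= z).
      { apply Rnot_lt_le; intro hz.
        assert (h := Hphi0 z ltac:(lra) ltac:(rewrite Rminus_0_r, Rabs_pos_eq; lra)).
        fold p0 in h. apply Rabs_def2 in h. nra. }
      assert (HzA : lp * z <= A).
      { specialize (Hb z ltac:(lra)). nra. }
      assert (Hcz : lf + (1 + lp) * z <= Zc).
      { unfold Zc. assert (z <= A / lp).
        { apply (Rmult_le_reg_r lp); [lra|]. unfold Rdiv. rewrite Rmult_assoc, Rinv_l by lra. lra. }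
        nra. }
      specialize (IHk t z Ht ltac:(lra)).
      destruct (Ft t Ht) as [_ [FK [[_ FG] [FR [FQ _]]]]].
      assert (HE : exp (- lam * z + gam * t) <= / 2).
      { apply exp_mhalf. assert (lam * z >= 4).
        { unfold lam. apply Rle_ge. apply Rle_trans with (4 / d0 * d0).
          - right; field; lra.
          - apply Rmult_le_compat_l; [left; apply Rdiv_lt_0_compat; lra| lra]. }
        lra. }
      set (c := lf + (1 + lp) * z) in *.
      set (Q := exp (rho * t)) in *.
      assert (HPQ : exp (- rho * t) * Q = 1).
      { unfold Q. replace (- rho * t) with (- (rho * t)) by ring. apply exp_inv. }
      assert (HQ1 : 1 <= Q) by (apply exp_ge1; nra).
      assert (Hc0 : 0 <= c) by (unfold c; nra).
      assert (Qc : Q * c <= c + e).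
      { assert ((Q - 1) * c <= (Q - 1) * Zc) by (apply Rmult_le_compat_l; lra). nra. }
      assert (DE : D * exp (- lam * z + gam * t) <= D / 2).
      { assert (D * exp (- lam * z + gam * t) <= D * / 2) by (apply Rmult_le_compat_l; lra). lra. }
      set (RHS := phi z - e - C * exp t * (kap * t) - D * exp (- lam * z + gam * t) - p0 + D).
      assert (M : Q * c <= RHS) by (unfold RHS, D in *; lra).
      assert (M2 : exp (- rho * t) * (Q * c) <= exp (- rho * t) * RHS)
        by (apply Rmult_le_compat_l; lra).
      replace (exp (- rho * t) * (Q * c)) with c in M2 by (rewrite <- Rmult_assoc, HPQ; ring).
      unfold RHS in M2. lra. }
  exists t1. split; [auto| split; [auto|]].
  intros n Hn t x Ht Hx.
  destruct n as [|k]; [lia|].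
  assert (Ht' : 0 <= t <= t1) by lra.
  specialize (Uall k t x Ht' Hx). specialize (Lall k t x Ht' Hx).
  destruct (Ft t Ht') as [_ [FK [[FG _] _]]].
  set (Q := exp (rho * t)).
  assert (HPQ : Q * exp (- rho * t) = 1).
  { unfold Q. replace (- rho * t) with (- (rho * t)) by ring. rewrite Rmult_comm. apply exp_inv. }
  assert (HQ : 0 < Q) by apply exp_pos.
  assert (HE : exp (- lam * x + gam * t) <= 2).
  { apply Rle_trans with (exp (gam * t)); auto. apply exp_le_exp. nra. }
  assert (U2 : Q * v (S k) t x <= phi x + e + C * exp t * (kap * t)).
  { apply Rle_trans with (Q * (exp (- rho * t) * (phi x + e + C * exp t * (kap * t)))).
    - apply Rmult_le_compat_l; lra.
    - rewrite <- (Rmult_assoc Q), HPQ. lra. }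
  assert (L2 : phi x - e - C * exp t * (kap * t) - D * exp (- lam * x + gam * t) <= Q * v (S k) t x).
  { apply Rle_trans with (Q * (exp (- rho * t) * (phi x - e - C * exp t * (kap * t) - D * exp (- lam * x + gam * t)))).
    - rewrite <- (Rmult_assoc Q), HPQ. lra.
    - apply Rmult_le_compat_l; lra. }
  assert (DE : D * exp (- lam * x + gam * t) <= D * 2) by (apply Rmult_le_compat_l; lra).
  assert (0 <= C * exp t * (kap * t)) by (apply Rmult_le_pos; [apply Rmult_le_pos; [lra| left; apply exp_pos]| nra]).
  apply Rabs_le. unfold D in *. lra.
Qed.

Lemma lub_real (E : R -> Prop) : (exists r, E r) -> (exists M, forall r, E r -> r <= M) ->
  (forall r, E r -> r <= real (Lub_Rbar E)) /\
  (forall b, (forall r, E r -> r <= b) -> real (Lub_Rbar E) <= b).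
Proof.
  intros [r0 Hr0] [M HM]. destruct (Lub_Rbar_correct E) as [Hub Hlub].
  destruct (Lub_Rbar E) as [a| |] eqn:Ea.
  - simpl. split.
    + intros r Hr. exact (Hub r Hr).
    + intros b Hb. exact (Hlub (Finite b) Hb).
  - exfalso. specialize (Hlub (Finite M) HM). simpl in Hlub. exact Hlub.
  - exfalso. specialize (Hub r0 Hr0). simpl in Hub. exact Hub.
Qed.

Theorem lemma3p10
  (mu sigma rho T lf lp A : R) (phi : R -> R) (v : nat -> R -> R -> R)
  (hmu : 0 < mu) (hsigma : 0 < sigma) (hrho : 0 < rho) (hT : 0 < T)
  (hlf : 0 < lf) (hlp : 0 < lp)
  (hA : mu * T / (exp (rho * T) - 1) <= A)
  (hphi : in_CA lf lp A phi)
  (hv0 : forall t x, inQbar T t x -> v 0%nat t x = v0 mu sigma rho phi t x)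
  (hsmooth : forall n, (1 <= n)%nat -> smooth_on_Q T (v n))
  (hcont : forall n, (1 <= n)%nat -> cont_on_Qbar T (v n))
  (hpde : forall n, (1 <= n)%nat -> forall t x, inQ T t x ->
     rho * v n t x
     + Derive (fun s => v n s x) t
     - mu * Derive (fun y => v n t y) x
     - / 2 * sigma ^ 2 * Derive (fun y => Derive (fun z => v n t z) y) x = 0)
  (hinit : forall n, (1 <= n)%nat -> forall x, 0 <= x -> v n 0 x = phi x)
  (hbdry : forall n, (1 <= n)%nat -> forall t, 0 <= t <= T ->
     Finite (v n t 0) = rbar_pos (Iop lf lp (fun y => v (n - 1)%nat t y) 0))
  (hbounds : forall n, (1 <= n)%nat -> forall t x, inQbar T t x ->
     exp (- rho * t) * x <= v n t x <= exp (- rho * t) * (x + A + mu * t)) :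
  exists m : R -> R, is_modulus m /\
    forall n, (1 <= n)%nat -> forall t x, inQbar T t x ->
      Rabs (exp (rho * t) * v n t x - phi x) <= m t.
Proof.
  assert (Hcore := core mu sigma rho T lf lp A phi v hmu hsigma hrho hT hlf hlp hphi
     hsmooth hcont hpde hinit hbdry hbounds).
  destruct hphi as [_ [_ [_ [_ [_ [_ Hb]]]]]].
  set (E := fun t r => exists n t' x, (1 <= n)%nat /\ 0 <= t' <= t /\ t' <= T /\ 0 <= x /\
      r = Rabs (exp (rho * t') * v n t' x - phi x)).
  assert (Ebd : forall t r, E t r -> 0 <= r <= A + mu * T).
  { intros t r [n [t' [x [Hn [Ht' [HtT [Hx ->]]]]]]].
    split; [apply Rabs_pos|].
    destruct (hbounds n Hn t' x ltac:(split; [split|]; lra)) as [B1 B2].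
    set (Q := exp (rho * t')).
    assert (HPQ : Q * exp (- rho * t') = 1).
    { unfold Q. rewrite <- exp_plus. replace (rho * t' + - rho * t') with 0 by ring. apply exp_0. }
    assert (HQ : 0 < Q) by apply exp_pos.
    assert (U : Q * v n t' x <= x + A + mu * t').
    { apply Rle_trans with (Q * (exp (- rho * t') * (x + A + mu * t'))).
      - apply Rmult_le_compat_l; lra.
      - rewrite <- (Rmult_assoc Q), HPQ. lra. }
    assert (L : x <= Q * v n t' x).
    { apply Rle_trans with (Q * (exp (- rho * t') * x)).
      - rewrite <- (Rmult_assoc Q), HPQ. lra.
      - apply Rmult_le_compat_l; lra. }
    specialize (Hb x Hx). assert (mu * t' <= mu * T) by nra.
    assert (0 <= mu * t') by nra. apply Rabs_le. lra. }
  assert (E0 : forall t, 0 <= t -> E t 0).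
  { intros t Ht. exists 1%nat, 0, 0. split; [lia|]. split; [lra|]. split; [lra|]. split; [lra|].
    rewrite (hinit 1%nat (le_n 1) 0 ltac:(lra)). rewrite Rmult_0_r, exp_0, Rmult_1_l, Rminus_eq_0, Rabs_R0. reflexivity. }
  set (S := fun t => real (Lub_Rbar (E t))).
  assert (HS : forall t, 0 <= t -> (forall r, E t r -> r <= S t) /\
                 (forall b, (forall r, E t r -> r <= b) -> S t <= b)).
  { intros t Ht. apply lub_real; [exists 0; apply E0; auto| exists (A + mu * T); intros r Hr; apply (Ebd t r Hr)]. }
  exists (fun t => t + S t). split.
  - split; [|split; [|split]].
    + intros s t Hs Hst.
      assert (S s <= S t).
      { apply (proj2 (HS s Hs)). intros r Hr. apply (proj1 (HS t ltac:(lra))).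
        destruct Hr as [n [t' [x [Hn [Ht' [HtT [Hx Hr]]]]]]].
        exists n, t', x. repeat split; auto; lra. }
      lra.
    + intros t Ht. assert (0 <= S t) by (apply (proj1 (HS t Ht)); apply E0; auto). lra.
    + assert (S 0 <= 0).
      { apply (proj2 (HS 0 ltac:(lra))). intros r [n [t' [x [Hn [Ht' [HtT [Hx ->]]]]]]].
        assert (t' = 0) by lra. subst t'.
        rewrite (hinit n Hn x Hx), Rmult_0_r, exp_0, Rmult_1_l, Rminus_eq_0, Rabs_R0. lra. }
      assert (0 <= S 0) by (apply (proj1 (HS 0 ltac:(lra))); apply E0; lra).
      lra.
    + apply filterlim_locally. intros eps.
      destruct (Hcore (eps / 2) ltac:(destruct eps; simpl; lra)) as [d [Hd [HdT Hc]]].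
      assert (Hpos : 0 < Rmin d (eps / 2)) by (apply Rmin_pos; [lra| destruct eps; simpl; lra]).
      exists (mkposreal _ Hpos). intros y Hy Hy0.
      apply ballR in Hy. simpl in Hy. apply Rabs_def2 in Hy. destruct Hy as [Hy _].
      rewrite Rminus_0_r in Hy.
      assert (y < d) by (eapply Rlt_le_trans; [exact Hy| apply Rmin_l]).
      assert (y < eps / 2) by (eapply Rlt_le_trans; [exact Hy| apply Rmin_r]).
      assert (S y <= eps / 2).
      { apply (proj2 (HS y Hy0)). intros r [n [t' [x [Hn [Ht' [HtT [Hx ->]]]]]]].
        apply Hc; auto; lra. }
      assert (0 <= S y) by (apply (proj1 (HS y Hy0)); apply E0; auto).
      apply ballR. rewrite Rminus_0_r, Rabs_pos_eq by lra. lra.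
  - intros n Hn t x [Ht Hx].
    assert (S t >= 0 \/ True) by auto.
    assert (Rabs (exp (rho * t) * v n t x - phi x) <= S t).
    { apply (proj1 (HS t ltac:(lra))). exists n, t, x. repeat split; auto; lra. }
    lra.
Qed.
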